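(* Let $n\ge2$, let $X\subset\mathbb{R}^n$ be finite with the Euclidean metric $d$, let $k\in\mathbb{N}$, and fix an increasing sequence $0=\epsilon_0<\epsilon_1<\epsilon_2<\cdots$. Let $i\in\mathbb{N}$. For every $\alpha$ with $\epsilon_{i-1}<\alpha\le\epsilon_i$: (1) $E(H(i)_\alpha)\subset E(G(X,\rho^X)_\alpha)$; (2) if $(p,q)\in E(G(X,\rho^X)_\alpha)$, then there is a path in $H(i)_\alpha$ joining $p$ and $q$.
   Context: DBSCAN$^*$: for $Y\subset X$ and $\epsilon>0$, $\mathcal{C}(Y,\epsilon)=\{p\in Y:|\{y\in Y:d(p,y)\le\epsilon\}|>k\}$, $\mathcal{N}(Y,\epsilon)=Y\setminus\mathcal{C}(Y,\epsilon)$, and $\mathcal{D}^*(Y,\epsilon)$ is the set of vertex sets of the connected components of the graph with vertex set $\mathcal{C}(Y,\epsilon)$ and an edge between distinct $p,q$ whenever $d(p,q)\le\epsilon$. For $Z\subset X$ and $p\in Z$, $\operatorname{core}^Z_k(p)$ is the distance from $p$ to a $k$-th nearest neighbour of $p$ in $Z$ (the $k$-th smallest value of $d(p,z)$, $z\in Z\setminus\{p\}$, with multiplicity) and $\rho^Z(p,q)=\max\{\operatorname{core}^Z_k(p),\operatorname{core}^Z_k(q),d(p,q)\}$ for $p\ne q$, $\rho^Z(p,p)=0$. Cubes (for a given $\epsilon>0$): $\mathcal{Q}(\epsilon)$ is the collection of closed cubes $\{x\in\mathbb{R}^n: j_i\frac{\epsilon}{2\sqrt n}\le x_i\le (j_i+1)\frac{\epsilon}{2\sqrt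 n}\}$, $j\in\mathbb{Z}^n$; $S^m=\{x:\max_i|x_i-s_i|\le m\frac{\epsilon}{2\sqrt n}\text{ for some }s\in S\}$; $\mathcal{I}(B)=\{S\in\mathcal{Q}(\epsilon):S\cap B\ne\emptyset\}$. For $A\subset X$, $S\in\mathcal{I}(A)$ is an interior cube of $A$ if $S^1\cap X\subset A$ and every $T\in\mathcal{Q}(\epsilon)$ with $T\subset S^1$ lies in $\mathcal{I}(A)$, otherwise a boundary cube; $\partial A$ is the union of boundary cubes. For $Z\subset\mathbb{R}^n$, integer $N\ge0$: $Z^N=\bigcup_{S\in\mathcal{I}(Z)}S^N$, $Z^N_C=Z^N\cap C$. $\mathfrak{n},\mathfrak{m}$ are the smallest integers with $\mathfrak{n}\ge\sqrt n-1$, $\mathfrak{m}\ge2\sqrt n$; $\mathfrak{N}=\mathfrak{n}+\mathfrak{m}$. $F(Y,\epsilon)=\bigcup_{C\in\mathcal{D}^*(Y,\epsilon)}(\partial C)^{\mathfrak{N}}_C\cup\mathcal{N}(Y,\epsilon)$, cubes in $\mathcal{Q}(\epsilon)$. Graphs: $G(Z,w)$ is the complete weighted graph on finite $Z$ with weights $w(p,q)$; for a weighted graph $G$ and $\alpha\ge0$, $G_\alpha$ has the same vertices and only the edges of weight $\le\alpha$; $E(G)$ is the edge set. The union $G\cup H$ of weighted graphs has vertex set $V(G)\cup V(H)$, edge set $E(G)\cup E(H)$, and weight on a common edge the minimum of the two weights. Construction: $X_1=X$, $X_{i+1}=F(X_i,\epsilon_i)$ for $i\ge1$; $H(0)$ is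 the graph on $X_1$ with no edges; for $i\ge0$, $H(i+1)=\bigcup_{C\in\mathcal{D}^*(X_{i+1},\epsilon_{i+1})}G\big(B_{\epsilon_{i+1}}(C),\rho^{B_{\epsilon_{i+1}}(C)}\big)_{\epsilon_{i+1}}\cup H(i)$, where $B_{\epsilon_{i+1}}(C)=\{y\in X_{i+1}: d(y,C)\le\epsilon_{i+1}\}$. *)

(* Defs.v *)
From HB Require Import structures.
From mathcomp Require Import all_boot all_order all_algebra.
From mathcomp Require Import finmap.
From mathcomp Require Import boolp reals constructive_ereal.
Set Implicit Arguments.
Unset Strict Implicit.
Unset Printing Implicit Defensive.
Import Order.TTheory GRing.Theory Num.Theory.
Local Open Scope ring_scope.
Local Open Scope fset_scope.

Section DBSCAN.
Variables (R : realType) (n : nat).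
Local Notation P := 'rV[R]_n.

Definition dist (x y : P) : R := Num.sqrt (\sum_(i < n) (x 0 i - y 0 i) ^+ 2).

Definition side (e : R) : R := e / (2 * Num.sqrt (n%:R)).

Definition in_cube (e : R) (j : 'I_n -> int) (x : P) : Prop :=
  forall i, (j i)%:~R * side e <= x 0 i <= (j i + 1)%:~R * side e.

Definition in_thick (e : R) (j : 'I_n -> int) (m : R) (x : P) : Prop :=
  exists s : P, in_cube e j s /\
    forall i, `|x 0 i - s 0 i| <= m * side e.

Definition meets (e : R) (j : 'I_n -> int) (B : P -> Prop) : Prop :=
  exists x, B x /\ in_cube e j x.

Definition interior_cube (X : {fset P}) (e : R) (A : {fset P})
    (j : 'I_n -> int) : Prop :=
  [/\ meets e j (fun x => x \in A),
      (forall x, x \in X -> in_thick e j 1 x -> x \in A) &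
      (forall t : 'I_n -> int, (forall x, in_cube e t x -> in_thick e j 1 x) ->
          meets e t (fun x => x \in A))].

Definition boundary_cube (X : {fset P}) (e : R) (A : {fset P})
    (j : 'I_n -> int) : Prop :=
  meets e j (fun x => x \in A) /\ ~ interior_cube X e A j.

Definition in_boundary (X : {fset P}) (e : R) (A : {fset P}) (z : P) : Prop :=
  exists j, boundary_cube X e A j /\ in_cube e j z.

Definition in_thicken (e : R) (Z : P -> Prop) (N : R) (x : P) : Prop :=
  exists j, meets e j Z /\ in_thick e j N x.

Definition frak_n : int := Num.ceil (Num.sqrt (n%:R) - 1 : R).
Definition frak_m : int := Num.ceil (2 * Num.sqrt (n%:R) : R).
Definition frak_N : int := frak_n + frak_m.

Variable k : nat.

Definition core_pts (Y : {fset P}) (e : R) : {fset P} :=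
  [fset p in Y | (k < #|` [fset y in Y | (dist p y <= e)%R]|)%N].

Definition noise (Y : {fset P}) (e : R) : {fset P} := Y `\` core_pts Y e.

Definition core_edge (Y : {fset P}) (e : R) : rel P :=
  fun a b => [&& a \in core_pts Y e, b \in core_pts Y e, a != b & dist a b <= e].

Definition reach (Y : {fset P}) (e : R) (p q : P) : Prop :=
  exists s : seq P, path (core_edge Y e) p s /\ last p s = q.

Definition component (Y : {fset P}) (e : R) (p : P) : {fset P} :=
  [fset q in core_pts Y e | `[< reach Y e p q >]].

Definition components (Y : {fset P}) (e : R) : {fset {fset P}} :=
  [fset component Y e p | p in core_pts Y e].

(* F(Y, eps); X is the ambient data set (used in the notion of interior cube).
   Every piece of the union is a subset of Y, so we filter Y. *)
Definition Fset (X Y : {fset P}) (e : R) : {fset P} :=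
  [fset x in Y | `[< x \in noise Y e \/
      exists C, C \in components Y e /\ x \in C /\
        in_thicken e (in_boundary X e C) (frak_N%:~R) x >]].

(* core^Z_k(p): k-th smallest distance from p to Z \ {p} (with multiplicity);
   +oo if Z \ {p} has fewer than k points; 0 when k = 0. *)
Definition core_dist (Z : {fset P}) (p : P) : \bar R :=
  let ds := sort <=%R [seq dist p z | z <- enum_fset Z & z != p] in
  if k == 0%N then 0%E
  else if (k <= size ds)%N then (nth 0 ds k.-1)%:E else +oo%E.

Definition rho (Z : {fset P}) (p q : P) : \bar R :=
  if p == q then 0%E
  else Order.max (Order.max (core_dist Z p) (core_dist Z q)) (dist p q)%:E.

Variables (X : {fset P}) (eps : nat -> R).

(* Xs j = X_{j+1} :  X_1 = X,  X_{j+2} = F(X_{j+1}, eps_{j+1}) *)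
Fixpoint Xs (j : nat) : {fset P} :=
  match j with
  | 0 => X
  | j'.+1 => Fset X (Xs j') (eps j)
  end.

Definition ballC (Y C : {fset P}) (e : R) : {fset P} :=
  [fset y in Y | has (fun c => dist y c <= e) (enum_fset C)].

(* Weighted graphs on the vertex set X are encoded by a weight function;
   weight +oo means "no edge".  Weight of (p,q) in G(Z, rho^Z)_e : *)
Definition gw (Z : {fset P}) (e : R) (p q : P) : \bar R :=
  if [&& p \in Z, q \in Z, p != q & (rho Z p q <= e%:E)%E] then rho Z p q
  else +oo%E.

(* Hw i = weight function of H(i); union of graphs = minimum of weights *)
Fixpoint Hw (i : nat) : P -> P -> \bar R :=
  match i with
  | 0 => fun _ _ => +oo%E
  | i'.+1 => fun p q =>
      Order.min (Hw i' p q)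
        (foldr (fun C acc => Order.min (gw (ballC (Xs i') C (eps i)) (eps i) p q) acc)
               +oo%E (enum_fset (components (Xs i') (eps i))))
  end.

Definition H_edge (i : nat) (alpha : R) : rel P :=
  fun p q => [&& p \in X, q \in X, p != q & (Hw i p q <= alpha%:E)%E].

Definition G_edge (alpha : R) : rel P :=
  fun p q => [&& p \in X, q \in X, p != q & (rho X p q <= alpha%:E)%E].

End DBSCAN.

(* Main.v *)
Require Import Defs.
From HB Require Import structures.
From mathcomp Require Import all_boot all_order all_algebra.
From mathcomp Require Import finmap.
From mathcomp Require Import boolp reals constructive_ereal.
From mathcomp Require Import ring lra zify.
Import Order.TTheory GRing.Theory Num.Theory.
Local Open Scope ring_scope.
Local Open Scope fset_scope.


Local Open Scope fset_scope.
Local Open Scope ring_scope.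
Local Open Scope fset_scope.

Local Close Scope fset_scope.
Section Geo.
Variables (R : realType) (n : nat).
Local Notation P := 'rV[R]_n.

Lemma CS (a b : 'I_n -> R) :
  (\sum_i a i * b i) ^+ 2 <= (\sum_i a i ^+ 2) * (\sum_i b i ^+ 2).
Proof.
set A := \sum_i a i ^+ 2; set B := \sum_i b i ^+ 2; set S := \sum_i a i * b i.
have A0 : 0 <= A by apply: sumr_ge0 => i _; exact: sqr_ge0.
have E : \sum_i (A * b i - S * a i) ^+ 2 = A * (A * B - S ^+ 2).
  transitivity (\sum_i (A ^+ 2 * b i ^+ 2 - (2 * A * S) * (a i * b i) + S ^+ 2 * a i ^+ 2)).
    by apply: eq_bigr => i _; ring.
  rewrite big_split /= sumrB -!mulr_sumr -/A -/B -/S; ring.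
have H : 0 <= A * (A * B - S ^+ 2).
  by rewrite -E; apply: sumr_ge0 => i _; exact: sqr_ge0.
have [Ap|] := ltP 0 A.
  by rewrite -subr_ge0; rewrite pmulr_rge0 in H.
move=> Ale; have A00 : A = 0 by apply/eqP; rewrite eq_le Ale A0.
have ai0 : forall i, a i = 0.
  move=> i; have /eqP := A00; rewrite /A psumr_eq0; last by move=> j _; exact: sqr_ge0.
  by move/allP/(_ i (mem_index_enum i)); rewrite /= sqrf_eq0 => /eqP.
have -> : S = 0 by rewrite /S big1 // => i _; rewrite ai0 mul0r.
rewrite expr0n /=; apply: mulr_ge0 => //; apply: sumr_ge0 => i _; exact: sqr_ge0.
Qed.

Lemma minkowski (a b : 'I_n -> R) :
  Num.sqrt (\sum_i (a i + b i) ^+ 2) <=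
  Num.sqrt (\sum_i a i ^+ 2) + Num.sqrt (\sum_i b i ^+ 2).
Proof.
set A := \sum_i a i ^+ 2; set B := \sum_i b i ^+ 2; set S := \sum_i a i * b i.
have A0 : 0 <= A by apply: sumr_ge0 => i _; exact: sqr_ge0.
have B0 : 0 <= B by apply: sumr_ge0 => i _; exact: sqr_ge0.
have E : \sum_i (a i + b i) ^+ 2 = A + 2 * S + B.
  transitivity (\sum_i (a i ^+ 2 + 2 * (a i * b i) + b i ^+ 2)).
    by apply: eq_bigr => i _; ring.
  by rewrite !big_split /= -mulr_sumr.
have HS : S <= Num.sqrt A * Num.sqrt B.
  rewrite -sqrtrM //; apply: le_trans (ler_norm S) _.
  by rewrite -sqrtr_sqr ler_wsqrtr // CS.
have -> : Num.sqrt A + Num.sqrt B = Num.sqrt ((Num.sqrt A + Num.sqrt B) ^+ 2).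
  by rewrite sqrtr_sqr ger0_norm // addr_ge0 // sqrtr_ge0.
apply: ler_wsqrtr; rewrite E sqrrD !sqr_sqrtr //; lra.
Qed.

Lemma dist_ge0 (x y : P) : 0 <= dist x y.
Proof. exact: sqrtr_ge0. Qed.

Lemma dist_sym (x y : P) : dist x y = dist y x.
Proof. by rewrite /dist; congr Num.sqrt; apply: eq_bigr => i _; ring. Qed.

Lemma dist_xx (x : P) : dist x x = 0.
Proof. by rewrite /dist big1 ?sqrtr0 // => i _; rewrite subrr expr0n. Qed.

Lemma dist_tri (x y z : P) : dist x z <= dist x y + dist y z.
Proof.
rewrite /dist; have := minkowski (fun i => x 0 i - y 0 i) (fun i => y 0 i - z 0 i).
by under eq_bigr do rewrite subrKA.
Qed.

Lemma coord_le_dist (x y : P) i : `|x 0 i - y 0 i| <= dist x y.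
Proof.
rewrite /dist -sqrtr_sqr ler_wsqrtr // (bigD1 i) //= lerDl.
by apply: sumr_ge0 => j _; exact: sqr_ge0.
Qed.

Lemma dist_le_coord (x y : P) (c : R) : 0 <= c ->
  (forall i, `|x 0 i - y 0 i| <= c) -> dist x y <= Num.sqrt n%:R * c.
Proof.
move=> c0 H; rewrite /dist -(ger0_norm c0) -sqrtr_sqr -sqrtrM ?ler0n //.
apply: ler_wsqrtr; apply: le_trans (_ : \sum_(i < n) c ^+ 2 <= _).
  apply: ler_sum => i _; have := H i; rewrite ler_norml => /andP[h1 h2]; nra.
by rewrite sumr_const card_ord mulr_natl.
Qed.

Definition seg (a b : P) (l : R) : P := \row_i (a 0 i + l * (b 0 i - a 0 i)).

Lemma seg_coord (a b : P) l i : 0 <= l ->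
  `|seg a b l 0 i - a 0 i| <= l * dist a b.
Proof.
move=> l0; rewrite /seg mxE addrAC subrr add0r normrM ger0_norm //.
by rewrite ler_wpM2l // distrC coord_le_dist.
Qed.

Lemma seg_dist (a b : P) l : 0 <= l <= 1 ->
  dist (seg a b l) b = (1 - l) * dist a b.
Proof.
case/andP=> l0 l1; rewrite /dist.
rewrite -(ger0_norm (_ : 0 <= 1 - l)); last by lra.
rewrite -sqrtr_sqr -sqrtrM ?sqr_ge0 // mulr_sumr; congr Num.sqrt.
by apply: eq_bigr => i _; rewrite /seg mxE; ring.
Qed.

End Geo.
Arguments dist_ge0 {R n}. Arguments dist_sym {R n}. Arguments dist_xx {R n}.
Arguments dist_tri {R n}. Arguments coord_le_dist {R n}. Arguments dist_le_coord {R n}.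
Arguments seg {R n}. Arguments seg_coord {R n}. Arguments seg_dist {R n}.


Local Open Scope fset_scope.
Local Open Scope ring_scope.
Local Open Scope fset_scope.

Section Sorting.
Variable R : realType.

Lemma S1 (s : seq R) (j : nat) : sorted <=%R s -> (j < size s)%N ->
  leq (count (fun x : R => x < nth (0:R) s j) s) j.
Proof.
move=> ss js.
have sd := drop_sorted j ss.
rewrite (drop_nth 0 js) in sd.
rewrite -[in X in count _ X](cat_take_drop j s) count_cat (drop_nth 0 js) /= ltxx add0n.
move: sd => /= /(order_path_min le_trans) /allP Hall.
have -> : count (fun x : R => x < nth (0:R) s j) (drop j.+1 s) = 0%N.
  rewrite (eq_in_count (a2 := pred0)) ?count_pred0 //.
  by move=> y yin; have /= xy := Hall y yin; rewrite ltNge xy.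
rewrite addn0; apply: leq_trans (count_size _ _) _.
by rewrite size_take js.
Qed.

Lemma S2 (s : seq R) (j : nat) : sorted <=%R s -> (j < size s)%N ->
  leq j.+1 (count (fun x : R => x <= nth (0:R) s j) s).
Proof.
move=> ss js; set x := nth 0 s j.
rewrite -[in X in count _ X](cat_take_drop j.+1 s) count_cat.
have -> : count (fun y => y <= x) (take j.+1 s) = j.+1.
  have sz : size (take j.+1 s) = j.+1 by rewrite size_takel.
  rewrite (eq_in_count (a2 := predT)) ?count_predT ?sz //.
  move=> y /(nthP 0) [m]; rewrite sz => ms <-.
  rewrite nth_take //; apply: (sorted_leq_nth le_trans lexx) => //.
  by rewrite inE (leq_trans ms).
by rewrite ltn_addr.
Qed.

Lemma S3 (s : seq R) (j : nat) (r : R) : sorted <=%R s ->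
  leq j.+1 (count (fun x : R => x <= r) s) -> (j < size s)%N /\ nth (0:R) s j <= r.
Proof.
move=> ss H; have js : (j < size s)%N by apply: leq_trans H (count_size _ _).
split => //; rewrite leNgt; apply/negP => rx.
have := @S1 s j ss js; rewrite leqNgt => /negP; apply.
apply: leq_trans H _; apply: sub_count => y /= yr; exact: le_lt_trans yr rx.
Qed.

End Sorting.

Section Core.
Variables (R : realType) (n : nat) (k : nat).
Local Notation P := 'rV[R]_n.

Lemma cardE (A : {fset P}) (Q : pred P) :
  #|` [fset z in A | Q z]| = count Q (enum_fset A).
Proof.
have -> : [fset z in A | Q z] = [fset z in [seq z <- enum_fset A | Q z]].
  by apply/fsetP => z; rewrite !inE mem_filter andbC.
by rewrite card_fseq undup_id ?size_filter // filter_uniq // fset_uniq.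
Qed.

Definition ds (Z : {fset P}) (p : P) :=
  sort <=%R [seq dist p z | z <- enum_fset Z & z != p].

Lemma ds_sorted (Z : {fset P}) (p : P) : sorted <=%R (ds Z p).
Proof. by apply: sort_sorted; exact: le_total. Qed.

Lemma count_ds (Z : {fset P}) (p : P) (T : pred R) :
  count T (ds Z p) = #|` [fset z in Z | (z != p) && T (dist p z)]|.
Proof.
have /permP <- : perm_eq [seq dist p z | z <- enum_fset Z & z != p] (ds Z p).
  by rewrite perm_sym /ds perm_sort perm_refl.
rewrite count_map count_filter cardE.
by apply: eq_count => z /=; rewrite andbC.
Qed.

Lemma size_ds (Z : {fset P}) (p : P) : size (ds Z p) = #|` [fset z in Z | z != p]|.
Proof.
rewrite -(count_predT (ds Z p)) count_ds; congr (#|` _|).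
by apply/fsetP => z; rewrite !inE andbT.
Qed.

Lemma core_distE (Z : {fset P}) (p : P) : core_dist k Z p =
  if k == 0%N then 0%E
  else if (k <= size (ds Z p))%N then (nth 0 (ds Z p) k.-1)%:E else +oo%E.
Proof. by []. Qed.

Lemma core_le (Z : {fset P}) (p : P) (r : R) : 0 <= r ->
  leq k #|` [fset z in Z | (z != p) && (dist p z <= r)]| ->
  (core_dist k Z p <= r%:E)%E.
Proof.
move=> r0 H; rewrite core_distE; case: eqP => [_|/eqP k0]; first by rewrite lee_fin.
have k1 : leq k.-1.+1 (count (fun x : R => x <= r) (ds Z p)).
  by rewrite count_ds prednK ?lt0n.
have [h1 h2] := @S3 R _ _ _ (ds_sorted Z p) k1.
by rewrite prednK ?lt0n // in h1; rewrite h1 lee_fin.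
Qed.

Lemma core_cases (Z : {fset P}) (p : P) (a : R) : k != 0%N ->
  (core_dist k Z p <= a%:E)%E ->
  exists r, [/\ core_dist k Z p = r%:E, r <= a,
    leq k #|` [fset z in Z | (z != p) && (dist p z <= r)]| &
    leq #|` [fset z in Z | (z != p) && (dist p z < r)]| k.-1].
Proof.
move=> k0; rewrite core_distE (negbTE k0).
case: ifP => [ks|_]; last by rewrite leye_eq.
rewrite lee_fin => ra; exists (nth 0 (ds Z p) k.-1); split => //.
- have ks' : (k.-1 < size (ds Z p))%N by rewrite prednK ?lt0n.
  have := @S2 R _ _ (ds_sorted Z p) ks'.
  by rewrite count_ds prednK ?lt0n.
- have ks' : (k.-1 < size (ds Z p))%N by rewrite prednK ?lt0n.
  have := @S1 R _ _ (ds_sorted Z p) ks'.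
  by rewrite count_ds.
Qed.

Lemma card_sub (A B : {fset P}) (Q : pred P) : A `<=` B ->
  leq #|` [fset z in A | Q z]| #|` [fset z in B | Q z]|.
Proof.
move=> /fsubsetP AB; apply: fsubset_leq_card; apply/fsubsetP => z.
by rewrite !inE => /andP[/AB -> ->].
Qed.

Lemma core_mono (Z W : {fset P}) (p : P) : Z `<=` W ->
  (core_dist k W p <= core_dist k Z p)%E.
Proof.
move=> ZW; have [k0|k0] := eqVneq k 0%N.
  by rewrite !core_distE k0.
case E: (core_dist k Z p) => [r| |]; last first.
- by move: E; rewrite core_distE (negbTE k0); case: ifP.
- exact: leey.
have [r' [E' _ h1 _]] := @core_cases Z p r k0 ltac:(by rewrite E).
rewrite E in E'; case: E' => <-{r'} in h1.
have r0 : 0 <= r.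
  have : leq 1 #|` [fset z in Z | (z != p) && (dist p z <= r)]|.
    by apply: leq_trans h1; rewrite lt0n.
  rewrite cardfs_gt0 => /fset0Pn [z]; rewrite !inE => /andP[_ /andP[_ dz]].
  exact: le_trans (dist_ge0 _ _) dz.
apply: core_le => //; apply: leq_trans h1 _.
exact: card_sub.
Qed.

End Core.
Arguments core_cases {R n k Z p a}. Arguments core_le {R n k Z p r}.
Arguments core_mono {R n k Z W p}. Arguments card_sub {R n A B}.
Arguments core_distE {R n k}.


Local Open Scope fset_scope.
Local Open Scope ring_scope.
Local Close Scope fset_scope.

Section Cubes.
Variables (R : realType) (n : nat) (e : R).
Local Notation P := 'rV[R]_n.
Hypothesis n0 : (0 < n)%N.
Hypothesis e0 : 0 < e.
Local Notation s := (side n e).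

Lemma side_gt0 : 0 < s.
Proof.
rewrite /side divr_gt0 // mulr_gt0 // sqrtr_gt0 ltr0n //.
Qed.

Lemma thickE (j : 'I_n -> int) (M : R) (x : P) : 0 <= M ->
  in_thick e j M x <->
  (forall i, (j i)%:~R * s - M * s <= x 0 i <= (j i)%:~R * s + s + M * s).
Proof.
move=> M0; have s0 := side_gt0; have Ms : 0 <= M * s by rewrite mulr_ge0 // ltW.
split.
  case=> w [wc H] i; have := wc i; have := H i; rewrite intrD /= ler_norml.
  move=> /andP[h1 h2] /andP[h3 h4]; apply/andP; split; lra.
move=> H.
pose w : P := \row_i (let a := (j i)%:~R * s in
   if x 0 i < a then a else if a + s < x 0 i then a + s else x 0 i).
exists w; split => i; rewrite /w mxE /=; have := H i;
  move=> /andP[h1 h2].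
- rewrite intrD mulrDl mul1r.
  case: ifP => [xa|/negbT]; first by apply/andP; split; lra.
  rewrite -leNgt => ax; case: ifP => [xb|/negbT]; first by apply/andP; split; lra.
  rewrite -leNgt => bx; apply/andP; split; lra.
- rewrite ler_norml.
  case: ifP => [xa|/negbT]; first by apply/andP; split; lra.
  rewrite -leNgt => ax; case: ifP => [xb|/negbT]; first by apply/andP; split; lra.
  rewrite -leNgt => bx; apply/andP; split; lra.
Qed.

Lemma cubeE (j : 'I_n -> int) (x : P) :
  in_cube e j x <-> (forall i, (j i)%:~R * s <= x 0 i <= (j i)%:~R * s + s).
Proof.
by split=> H i; have := H i; rewrite intrD mulrDl mul1r.
Qed.

Lemma cube_of (w : P) : exists j, in_cube e j w.
Proof.
have s0 := side_gt0.
exists (fun i => Num.floor (w 0 i / s)); apply/cubeE => i.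
have /andP[h1 h2] := floor_itv (w 0 i / s).
rewrite intrD /= in h2.
rewrite ler_pdivlMr // in h1; rewrite ltr_pdivrMr // mulrDl mul1r in h2.
apply/andP; split => //; exact: ltW.
Qed.

Definition adj (j j' : 'I_n -> int) := forall i, (j' i - 1 <= j i <= j' i + 1)%R.

Lemma adj_real (j j' : 'I_n -> int) i : adj j j' ->
  (j' i)%:~R - 1 <= (j i)%:~R :> R /\ (j i)%:~R <= (j' i)%:~R + 1 :> R.
Proof.
move=> /(_ i) /andP[h1 h2]; split.
  by rewrite -[1]/(1%:~R) -intrB ler_int.
by rewrite -[1]/(1%:~R) -intrD ler_int.
Qed.

Lemma thick_step (j : 'I_n -> int) (M : R) (y : P) : 0 <= M ->
  in_thick e j (M + 1) y -> exists j', adj j j' /\ in_thick e j' M y.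
Proof.
have s0 := side_gt0.
move=> M0; have M1 : 0 <= M + 1 by lra.
move=> /(thickE j (M + 1) y M1) H.
pose j' := fun i => let a := (j i)%:~R * s in
  if a + s + M * s < y 0 i then (j i + 1)%R
  else if y 0 i < a - M * s then (j i - 1)%R else j i.
exists j'; split.
  move=> i; rewrite /j' /=; case: ifP => _; [|case: ifP => _]; apply/andP; split; lia.
apply/(thickE j' M y M0) => i; have := H i; rewrite /j' /=.
have Ms : 0 <= M * s by rewrite mulr_ge0 // ltW.
rewrite mulrDl mul1r => /andP[h1 h2].
case: ifP => [c1|/negbT]; first by rewrite intrD mulrDl mul1r; apply/andP; split; lra.
rewrite -leNgt => c1; case: ifP => [c2|/negbT].
  by rewrite intrB mulrBl mul1r; apply/andP; split; lra.
rewrite -leNgt => c2; apply/andP; split; lra.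
Qed.

Lemma adj_mul (j j' : 'I_n -> int) i : adj j j' ->
  (j' i)%:~R * s - s <= (j i)%:~R * s /\ (j i)%:~R * s <= (j' i)%:~R * s + s.
Proof.
have s0 := side_gt0.
move=> /(adj_real _ _ i) [h1 h2]; split.
  by rewrite -{2}(mul1r s) -mulrBl ler_pM2r.
by rewrite -{3}(mul1r s) -mulrDl ler_pM2r.
Qed.

Lemma adj_sub (j j' : 'I_n -> int) (x : P) : adj j j' ->
  in_cube e j x -> in_thick e j' 1 x.
Proof.
move=> a /cubeE H; apply/thickE; first exact: ler01.
move=> i; have /andP[h1 h2] := H i; have [a1 a2] := adj_mul _ _ i a.
rewrite mul1r; apply/andP; split; lra.
Qed.

Lemma adj_common (j j' : 'I_n -> int) : adj j j' ->
  exists w, in_cube e j w /\ in_cube e j' w.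
Proof.
have s0 := side_gt0.
move=> a; pose t := fun i => if (j i <= j' i)%R then j' i else j i.
have L : forall i, (j i <= j' i)%R -> (j i)%:~R * s <= (j' i)%:~R * s.
  by move=> i h; rewrite ler_pM2r // ler_int.
have L' : forall i, ~~ (j i <= j' i)%R -> (j' i)%:~R * s <= (j i)%:~R * s.
  by move=> i h; rewrite ler_pM2r // ler_int; move: h; rewrite -ltNge => /ltW.
exists (\row_i ((t i)%:~R * s)); split; apply/cubeE => i; rewrite mxE /t;
  have [a1 a2] := adj_mul _ _ i a; case: ifP => h.
- by move: (L i h) => l; apply/andP; split; lra.
- by apply/andP; split; lra.
- by apply/andP; split; lra.
- by move: (L' i (negbT h)) => l; apply/andP; split; lra.
Qed.

Lemma thick_mono (j : 'I_n -> int) (M M' : R) (x : P) : M <= M' ->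
  in_thick e j M x -> in_thick e j M' x.
Proof.
have s0 := side_gt0.
move=> MM [w [wc H]]; exists w; split => // i; apply: le_trans (H i) _.
by rewrite ler_pM2r.
Qed.

Lemma thick0 (j : 'I_n -> int) (x : P) : in_thick e j 0 x -> in_cube e j x.
Proof.
move=> /(thickE _ _ _ (lexx 0)) H; apply/cubeE => i; have := H i.
by rewrite mul0r subr0 addr0.
Qed.

End Cubes.
Arguments side_gt0 {R n e}. Arguments thickE {R n e}. Arguments cubeE {R n e}.
Arguments cube_of {R n e}. Arguments adj {n}. Arguments adj_real {R n}.
Arguments thick_step {R n e} n0 e0 {j M y}. Arguments adj_mul {R n e}.
Arguments adj_sub {R n e} n0 e0 {j j' x}. Arguments adj_common {R n e} n0 e0 {j j'}.
Arguments thick_mono {R n e} n0 e0 {j M M' x}. Arguments thick0 {R n e} n0 e0 {j x}.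


Local Open Scope fset_scope.
Local Open Scope ring_scope.
Local Close Scope fset_scope.

Section G.
Variables (R : realType) (n : nat) (e : R).
Local Notation P := 'rV[R]_n.
Hypothesis n0 : (0 < n)%N.
Hypothesis e0 : 0 < e.
Local Notation s := (side n e).
Variables (X C : {fset P}) (y : P) (N0 : nat).
Hypothesis yC : y \in C.
Hypothesis nthick : ~ in_thicken e (in_boundary X e C) (N0%:R) y.

Lemma Ga j : in_thick e j (N0%:R + 1) y -> ~ boundary_cube X e C j.
Proof.
move=> Hj Hb; have [j' [a Hj']] := thick_step n0 e0 (ler0n _ N0) Hj.
apply: nthick; exists j'; split => //.
have [w [w1 w2]] := adj_common n0 e0 a.
by exists w; split => //; exists j; split.
Qed.

Lemma Gb (m : nat) : (m <= N0.+2)%N -> forall j, in_thick e j m%:R y ->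
  meets e j (fun x => x \in C).
Proof.
elim: m => [_ j /(thick0 n0 e0) H|m IH mN j]; first by exists y.
rewrite -natr1 => Hj.
have [j' [a Hj']] := thick_step n0 e0 (ler0n _ m) Hj.
have M' : meets e j' (fun x => x \in C) by apply: IH => //; lia.
have Hb : ~ boundary_cube X e C j'.
  apply: Ga; apply: (@thick_mono R n e n0 e0 j' m%:R (N0%:R+1) y _ Hj').
  by rewrite natr1 ler_nat; lia.
case: (pselect (interior_cube X e C j')) => [[_ _ H3]|Hni]; last first.
  by exfalso; apply: Hb; split.
apply: H3 => x.
exact: (@adj_sub R n e n0 e0 j j' x a).
Qed.

Lemma Gint j : in_thick e j (N0%:R + 1) y -> interior_cube X e C j.
Proof.
move=> Hj; case: (pselect (interior_cube X e C j)) => // Hni.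
exfalso; apply: (Ga _ Hj); split => //.
by apply: (Gb N0.+1) => //; rewrite -natr1.
Qed.

Definition clamp (lo hi z : R) := if z < lo then lo else if hi < z then hi else z.

Lemma clampP lo hi z : lo <= hi -> lo <= clamp lo hi z <= hi.
Proof.
rewrite /clamp => lh; case: ifP => [h|/negbT]; first by rewrite lexx lh.
rewrite -leNgt => h; case: ifP => [h'|/negbT]; first by rewrite lexx lh.
by rewrite -leNgt => h'; rewrite h h'.
Qed.

Lemma clampP2 lo hi z d : lo <= hi -> 0 <= d -> lo - d <= z <= hi + d ->
  `|z - clamp lo hi z| <= d.
Proof.
rewrite /clamp => lh d0 /andP[h1 h2]; rewrite ler_norml.
case: ifP => [h|/negbT]; first by apply/andP; split; lra.
rewrite -leNgt => h; case: ifP => [h'|/negbT]; first by apply/andP; split; lra.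
by rewrite -leNgt => h'; apply/andP; split; lra.
Qed.

Lemma G1 (z : P) : z \in X -> (forall i, `|z 0 i - y 0 i| <= (N0%:R + 2) * s) ->
  z \in C.
Proof.
have s0 := side_gt0 n0 e0.
move=> zX H.
have Ns : 0 <= (N0%:R + 1) * s by apply: mulr_ge0; [rewrite addr_ge0 ?ler0n | exact: ltW].
pose w : P := \row_i clamp (y 0 i - (N0%:R + 1) * s) (y 0 i + (N0%:R + 1) * s) (z 0 i).
have [j wj] := cube_of n0 e0 w.
have Hy : in_thick e j (N0%:R + 1) y.
  exists w; split => // i; rewrite /w mxE.
  have /andP[c1 c2] := @clampP (y 0 i - (N0%:R + 1) * s) (y 0 i + (N0%:R + 1) * s) (z 0 i) ltac:(lra).
  rewrite ler_norml; apply/andP; split; lra.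
have [_ H2 _] := Gint j Hy.
apply: H2 => //; exists w; split => // i; rewrite /w mxE mul1r.
apply: clampP2; [lra | exact: ltW |].
have := H i; rewrite ler_norml mulrDl => /andP[h1 h2]; apply/andP; split; lra.
Qed.

Lemma G2 (w : P) : (forall i, `|w 0 i - y 0 i| <= (N0%:R + 2) * s) ->
  exists2 z, z \in C & forall i, `|z 0 i - w 0 i| <= s.
Proof.
move=> H; have [j wj] := cube_of n0 e0 w.
have [z [zC zj]] : meets e j (fun x => x \in C).
  apply: (Gb N0.+2) => //; exists w; split => // i.
  by rewrite distrC -addn2 natrD H.
exists z => // i; move/cubeE: wj => /(_ i) /andP[w1 w2].
move/cubeE: zj => /(_ i) /andP[z1 z2]; rewrite ler_norml; apply/andP; split; lra.
Qed.

End G.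
Arguments G1 {R n e} n0 e0 {X C y N0}. Arguments G2 {R n e} n0 e0 {X C y N0}.


Local Open Scope fset_scope.
Local Open Scope ring_scope.
Local Open Scope fset_scope.

Section Struct.
Variables (R : realType) (n : nat) (k : nat).
Local Notation P := 'rV[R]_n.

Lemma in_core (Y : {fset P}) (e : R) p :
  (p \in core_pts k Y e) = (p \in Y) && (k < #|` [fset y in Y | (dist p y <= e)%R]|)%N.
Proof. by rewrite /core_pts !inE. Qed.

Lemma in_comp (Y : {fset P}) (e : R) p z :
  (z \in component k Y e p) <-> (z \in core_pts k Y e) /\ reach k Y e p z.
Proof. by rewrite /component !inE; split => [/andP[-> /asboolP]|[-> /asboolP]]. Qed.

Lemma comp_in (Y : {fset P}) (e : R) p : p \in core_pts k Y e ->
  component k Y e p \in components k Y e.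
Proof. by move=> pc; rewrite /components; apply: in_imfset. Qed.

Lemma comp_self (Y : {fset P}) (e : R) p : p \in core_pts k Y e ->
  p \in component k Y e p.
Proof. by move=> pc; apply/in_comp; split => //; exists [::]. Qed.

Lemma Fset_sub (X Y : {fset P}) e : Fset k X Y e `<=` Y.
Proof. by apply/fsubsetP => x; rewrite !inE => /andP[]. Qed.

Lemma ballC_sub (Y C : {fset P}) e : ballC Y C e `<=` Y.
Proof. by apply/fsubsetP => x; rewrite !inE => /andP[]. Qed.

Lemma core_sub (Y : {fset P}) e : core_pts k Y e `<=` Y.
Proof. by apply/fsubsetP => x; rewrite in_core => /andP[]. Qed.

Lemma core_core (Y W : {fset P}) (e : R) p : 0 <= e -> p \in core_pts k Y e ->
  (forall y, y \in Y -> dist p y <= e -> y \in W) ->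
  (core_dist k W p <= e%:E)%E.
Proof.
move=> e0; rewrite in_core => /andP[pY Hc] HW; apply: core_le => //.
set A := [fset y in Y | dist p y <= e] in Hc.
have : leq k #|` A `\ p|.
  by move: Hc; rewrite (cardfsD1 p A); case: (p \in A) => /=; lia.
move/leq_trans; apply; apply: fsubset_leq_card; apply/fsubsetP => z.
rewrite !inE => /andP[zp /andP[zY dz]]; rewrite zp dz !andbT.
exact: (HW z zY dz).
Qed.

Lemma core_sub_le (Y W : {fset P}) p (a : R) : 0 <= a ->
  (core_dist k Y p <= a%:E)%E ->
  (forall z, z \in Y -> dist p z <= a -> z \in W) ->
  (core_dist k W p <= a%:E)%E.
Proof.
move=> a0 H HW; have [k0|k0] := eqVneq k 0%N.
  by rewrite core_distE k0 /= lee_fin.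
have [r [_ ra h1 _]] := core_cases k0 H.
have r0 : 0 <= r.
  have : leq 1 #|` [fset z in Y | (z != p) && (dist p z <= r)]|.
    by apply: leq_trans h1; rewrite lt0n.
  rewrite cardfs_gt0 => /fset0Pn [z]; rewrite !inE => /andP[_ /andP[_ dz]].
  exact: le_trans (dist_ge0 _ _) dz.
apply: le_trans (_ : (r%:E <= a%:E)%E); last by rewrite lee_fin.
apply: core_le => //; apply: leq_trans h1 _; apply: fsubset_leq_card.
apply/fsubsetP => z; rewrite !inE => /andP[zY /andP[zp dz]].
by rewrite zp dz /= andbT; apply: HW => //; exact: le_trans ra.
Qed.

Lemma core_is_core (Y : {fset P}) p (a e : R) : p \in Y -> a <= e ->
  (core_dist k Y p <= a%:E)%E -> p \in core_pts k Y e.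
Proof.
move=> pY ae H; rewrite in_core pY /=.
have pin : p \in [fset y in Y | dist p y <= e].
  rewrite !inE pY dist_xx /=.
  have [k0|k0] := eqVneq k 0%N.
    by move: H; rewrite core_distE k0 lee_fin => /le_trans; apply.
  have [r [_ ra h1 _]] := core_cases k0 H.
  have : leq 1 #|` [fset z in Y | (z != p) && (dist p z <= r)]|.
    by apply: leq_trans h1; rewrite lt0n.
  rewrite cardfs_gt0 => /fset0Pn [z]; rewrite !inE => /andP[_ /andP[_ dz]].
  by apply: le_trans (dist_ge0 _ _) _; apply: le_trans dz _; apply: le_trans ra ae.
rewrite (cardfsD1 p) pin add1n ltnS.
have [k0|k0] := eqVneq k 0%N; first by rewrite k0.
have [r [_ ra h1 _]] := core_cases k0 H.
apply: leq_trans h1 _; apply: fsubset_leq_card; apply/fsubsetP => z.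
rewrite !inE => /andP[zY /andP[zp dz]]; rewrite zp zY /=.
by apply: le_trans dz _; apply: le_trans ra ae.
Qed.

End Struct.
Arguments in_core {R n k}. Arguments in_comp {R n k}. Arguments comp_in {R n k}.
Arguments comp_self {R n k}. Arguments Fset_sub {R n k}. Arguments ballC_sub {R n}.
Arguments core_sub {R n k}. Arguments core_core {R n k}. Arguments core_sub_le {R n k}.
Arguments core_is_core {R n k}.


Local Open Scope fset_scope.
Local Open Scope ring_scope.
Local Open Scope fset_scope.

Section HwS.
Variables (R : realType) (n : nat) (k : nat) (X : {fset 'rV[R]_n}) (eps : nat -> R).
Local Notation P := 'rV[R]_n.

Lemma rho_sym (Z : {fset P}) p q : rho k Z p q = rho k Z q p.
Proof. by rewrite /rho eq_sym; case: eqP => // _; rewrite dist_sym; congr (Order.max _ _); exact: maxC. Qed.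

Lemma gw_sym (Z : {fset P}) e p q : gw k Z e p q = gw k Z e q p.
Proof.
rewrite /gw rho_sym; case: (p \in Z); case: (q \in Z) => //=.
by rewrite eq_sym.
Qed.

Lemma foldr_sym (f : {fset P} -> P -> P -> \bar R) (s : seq {fset P}) p q :
  (forall C, f C p q = f C q p) ->
  foldr (fun C acc => Order.min (f C p q) acc) +oo%E s =
  foldr (fun C acc => Order.min (f C q p) acc) +oo%E s.
Proof. by move=> H; elim: s => //= C s ->; rewrite H. Qed.

Lemma Hw_sym i p q : Hw k X eps i p q = Hw k X eps i q p.
Proof.
elim: i => [//|i IH] /=; rewrite IH.
by rewrite (@foldr_sym (fun C => gw k (ballC (Xs k X eps i) C (eps i.+1)) (eps i.+1))) // => C; exact: gw_sym.
Qed.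

Lemma H_edge_sym i a p q : H_edge k X eps i a p q = H_edge k X eps i a q p.
Proof.
rewrite /H_edge Hw_sym eq_sym; case: (p \in X); case: (q \in X) => //=.
Qed.

Lemma Xs_sub j : Xs k X eps j.+1 `<=` Xs k X eps j.
Proof. exact: Fset_sub. Qed.

Lemma Xs_subX j : Xs k X eps j `<=` X.
Proof.
elim: j => [|j IH]; first exact: fsubset_refl.
exact: fsubset_trans (Xs_sub j) IH.
Qed.

Lemma foldr_le (f : {fset P} -> \bar R) (s : seq {fset P}) C : C \in s ->
  (foldr (fun C acc => Order.min (f C) acc) +oo%E s <= f C)%E.
Proof.
elim: s => //= D s IH; rewrite inE => /orP[/eqP ->|/IH H].
  by rewrite ge_min lexx.
by rewrite ge_min H orbT.
Qed.

Lemma foldr_ge (f : {fset P} -> \bar R) (s : seq {fset P}) x :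
  (forall C, C \in s -> (x <= f C)%E) ->
  (x <= foldr (fun C acc => Order.min (f C) acc) +oo%E s)%E.
Proof.
elim: s => [_|D s IH H] /=; first exact: leey.
rewrite le_min H ?mem_head //= IH // => C Cs; apply: H; rewrite inE Cs orbT //.
Qed.

Lemma Hw_mono i j p q : (j <= i)%N -> (Hw k X eps i p q <= Hw k X eps j p q)%E.
Proof.
elim: i => [|i IH]; first by rewrite leqn0 => /eqP ->.
rewrite leq_eqVlt => /orP[/eqP ->|]; first exact: lexx.
rewrite ltnS => /IH H; apply: le_trans H; rewrite /= ge_min lexx //.
Qed.

Lemma rho_mono (Z W : {fset P}) p q : Z `<=` W -> (rho k W p q <= rho k Z p q)%E.
Proof.
move=> ZW; rewrite /rho; case: eqP => // _.
by apply: le_max2 => //; apply: le_max2; exact: core_mono.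
Qed.

Lemma rho_le_Hw i p q : (rho k X p q <= Hw k X eps i p q)%E.
Proof.
elim: i => [|i IH] /=; first exact: leey.
rewrite le_min IH /=; apply: foldr_ge => C _.
rewrite /gw; case: ifP => _; last exact: leey.
apply: rho_mono.
exact: (@fsubset_trans _ (Xs k X eps i) _ _ (ballC_sub _ _ _) (Xs_subX i)).
Qed.

End HwS.
Arguments rho_sym {R n}. Arguments gw_sym {R n}. Arguments Hw_sym {R n}.
Arguments H_edge_sym {R n}. Arguments Xs_sub {R n}. Arguments Xs_subX {R n}.
Arguments foldr_le {R n}. Arguments foldr_ge {R n}. Arguments Hw_mono {R n}.
Arguments rho_mono {R n}. Arguments rho_le_Hw {R n}.


Local Open Scope fset_scope.
Local Open Scope ring_scope.
Local Close Scope fset_scope.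

Section Lev.
Variables (R : realType) (n : nat) (k : nat) (X : {fset 'rV[R]_n}) (eps : nat -> R).
Local Notation P := 'rV[R]_n.
Hypothesis hn : (2 <= n)%N.
Hypothesis heps0 : eps 0%N = 0.
Hypothesis heps : forall j, eps j < eps j.+1.

Lemma n0 : (0 < n)%N. Proof. by apply: leq_trans hn. Qed.

Lemma eps_mono a b : (a <= b)%N -> eps a <= eps b.
Proof.
elim: b => [|b IH]; first by rewrite leqn0 => /eqP ->.
rewrite leq_eqVlt => /orP[/eqP ->|]; first exact: lexx.
by rewrite ltnS => /IH H; apply: le_trans H (ltW (heps b)).
Qed.

Lemma eps_pos j : 0 < eps j.+1.
Proof. by rewrite -heps0; apply: lt_le_trans (heps 0) (eps_mono 1 j.+1 (ltn0Sn j)). Qed.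

Definition N0 := `|frak_N R n|%N.

Lemma sqrtn_ge1 : 1 <= Num.sqrt (n%:R : R).
Proof. by rewrite -{1}sqrtr1; apply: ler_wsqrtr; rewrite ler1n; apply: leq_trans hn. Qed.

Lemma N0E : (frak_N R n)%:~R = N0%:R :> R.
Proof.
have h : (0 <= frak_N R n)%R.
  rewrite /frak_N /frak_n /frak_m addr_ge0 // ceil_ge0.
    by have := sqrtn_ge1; lra.
  by have := sqrtn_ge1; lra.
rewrite /N0; case: (frak_N R n) h => // m _.
Qed.

Lemma N0big : 3 * Num.sqrt (n%:R : R) < N0%:R + 2.
Proof.
rewrite -N0E /frak_N /frak_n /frak_m intrD.
have := ceil_ge (Num.sqrt (n%:R : R) - 1); have := ceil_ge (2 * Num.sqrt (n%:R : R)).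
lra.
Qed.

Lemma removed x j : x \in X -> x \notin Xs k X eps j ->
  exists l, [/\ (l < j)%N, x \in Xs k X eps l & x \notin Xs k X eps l.+1].
Proof.
move=> xX; elim: j => [|j IH]; first by rewrite /= xX.
case: (boolP (x \in Xs k X eps j)) => [xj xj1|/IH [l [lj h1 h2]] _].
  by exists j.
by exists l; split => //; apply: ltnW.
Qed.

Section Level.
Variables (l : nat) (y : P).
Hypothesis yY : y \in Xs k X eps l.
Hypothesis ynF : y \notin Xs k X eps l.+1.
Local Notation Y := (Xs k X eps l).
Local Notation e := (eps l.+1).
Local Notation C := (component k Y e y).
Local Notation s := (side n e).

Lemma rem_prop : y \in core_pts k Y e /\
  ~ in_thicken e (in_boundary X e C) (N0%:R) y.
Proof.
have ynF' := ynF; rewrite /= /Fset !inE yY /= in ynF'; move/asboolPn: ynF' => H.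
have yc : y \in core_pts k Y e.
  case: (boolP (y \in core_pts k Y e)) => // yn; exfalso; apply: H; left.
  by rewrite andbT; rewrite in_core yY in yn.
split => // Ht; apply: H; right; exists C; split; first exact: comp_in.
by split; [exact: comp_self | rewrite N0E].
Qed.

Lemma lev_facts : [/\ 0 < e, 0 < s, e = 2 * Num.sqrt (n%:R : R) * s &
  3 * Num.sqrt (n%:R : R) * s < (N0%:R + 2) * s].
Proof.
have e0 := eps_pos l; have s0 := side_gt0 n0 e0.
have sq0 : 0 < Num.sqrt (n%:R : R) by have := sqrtn_ge1; lra.
split => //.
  by rewrite /side; field; rewrite gt_eqF.
by rewrite ltr_pM2r // N0big.
Qed.

Lemma U1 p q : p \in C -> dist p y <= e -> q \in X -> q \notin C ->
  exists2 z, z \in C & dist z q < dist p q.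
Proof.
move=> pC py qX qC; have [yc nth] := rem_prop; have yC := comp_self _ _ _ yc.
have [e0 s0 es Kb] := lev_facts.
set K := (N0%:R + 2) * s in Kb.
have sq0 : 0 < Num.sqrt (n%:R : R) by have := sqrtn_ge1; lra.
case: (boolP [forall i, `|q 0 i - y 0 i| <= K]) => [/forallP H|].
  by rewrite (G1 n0 e0 yC nth _ qX H) in qC.
move/forallPn => [i0]; rewrite -ltNge => Hi0.
set d := dist p q.
have dK : K - e < d.
  have h1 := coord_le_dist p q i0; have h2 := coord_le_dist p y i0.
  have h3 := ler_distD (p 0 i0) (q 0 i0) (y 0 i0).
  rewrite distrC in h1; rewrite -/d in h1; lra.
set t := K - e; have tE : t = K - e by [].
have t0 : Num.sqrt (n%:R : R) * s < t by rewrite /t; lra.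
have sqs : 0 <= Num.sqrt (n%:R : R) * s by rewrite mulr_ge0 ?sqrtr_ge0 // ltW.
have d0 : 0 < d by lra.
set lam := t / d.
have lamd : lam * d = t by rewrite /lam divfK // gt_eqF.
have lam0 : 0 <= lam by rewrite /lam divr_ge0 // ltW //; lra.
have lam1 : lam <= 1 by rewrite /lam ler_pdivrMr // mul1r; lra.
set c := seg p q lam.
have Hc : forall i, `|c 0 i - y 0 i| <= K.
  move=> i; have h1 := seg_coord p q lam i lam0; rewrite -/c -/d lamd in h1.
  have h2 := coord_le_dist p y i.
  have h3 := ler_distD (p 0 i) (c 0 i) (y 0 i); lra.
have [z zC Hz] := G2 n0 e0 yC nth _ Hc.
exists z => //.
have h1 := dist_le_coord z c s (ltW s0) Hz.
have h2 : dist c q = d - t by rewrite /c seg_dist ?lam0 ?lam1 // mulrBl mul1r lamd.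
have h3 := dist_tri z c q; lra.
Qed.

Lemma U2 p r : p \in X -> k != 0%N -> dist p y <= r ->
  leq #|` [fset x in X | (x != p) && (dist p x < r)]%fset| k.-1 -> p \in C.
Proof.
move=> pX k0 py Hcnt; have [yc nth] := rem_prop; have yC := comp_self _ _ _ yc.
have [e0 s0 es Kb] := lev_facts.
set K := (N0%:R + 2) * s in Kb.
have sq0 : 0 < Num.sqrt (n%:R : R) by have := sqrtn_ge1; lra.
case: (boolP [forall i, `|p 0 i - y 0 i| <= K]) => [/forallP H|].
  exact: (G1 n0 e0 yC nth _ pX H).
move/forallPn => [i0]; rewrite -ltNge => Hi0.
case: (boolP (p \in C)) => // pnC; exfalso.
set d := dist p y; have dE : d = dist p y by [].
have dK : K < d by have := coord_le_dist p y i0; lra.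
have sqs : 0 <= Num.sqrt (n%:R : R) * s by rewrite mulr_ge0 ?sqrtr_ge0 // ltW.
have K0 : 0 < K by lra.
have d0 : 0 < d by lra.
set lam := K / d.
have lamd : lam * d = K by rewrite /lam divfK // gt_eqF.
have lam0 : 0 <= lam by rewrite /lam divr_ge0 // ltW //.
have lam1 : lam <= 1 by rewrite /lam ler_pdivrMr // mul1r; lra.
set c := seg y p lam.
have Hc : forall i, `|c 0 i - y 0 i| <= K.
  move=> i; have := seg_coord y p lam i lam0; rewrite -/c dist_sym -/d lamd //.
have [z zC Hz] := G2 n0 e0 yC nth _ Hc.
have h1 := dist_le_coord z c s (ltW s0) Hz.
have h2 : dist c p = d - K.
  by rewrite /c seg_dist ?lam0 ?lam1 // mulrBl mul1r dist_sym -/d lamd.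
move/in_comp: zC => [zc _]; move: zc; rewrite in_core => /andP[_].
set A := [fset x in Y | (dist z x <= e)%R]%fset => HA.
have : leq #|` A| k.
  apply: leq_trans (_ : leq #|` (p |` [fset x in X | (x != p) && (dist p x < r)])%fset| _).
    apply: fsubset_leq_card; apply/fsubsetP => x; rewrite !inE => /andP[xY dx].
    case: eqP => //= xp; rewrite (fsubsetP (Xs_subX k X eps l)) //=.
    have h3 := dist_tri p c x; have h4 := dist_tri c z x.
    rewrite (dist_sym c z) in h4; rewrite (dist_sym p c) h2 in h3.
    lra.
  rewrite cardfsU1; apply: leq_trans (leq_add (leq_b1 _) Hcnt) _.
  by rewrite add1n prednK // lt0n.
by rewrite leqNgt HA.
Qed.

End Level.
Section Main.
Variables (i' : nat) (alpha : R).
Hypothesis ha1 : eps i' < alpha.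
Hypothesis ha2 : alpha <= eps i'.+1.
Local Notation Xi := (Xs k X eps i').
Local Notation HE := (H_edge k X eps i'.+1 alpha).

Definition hconn a b := exists s, path HE a s /\ last a s = b.

Lemma hconn_refl a : hconn a a. Proof. by exists [::]. Qed.

Lemma hconn_trans {a b c} : hconn a b -> hconn b c -> hconn a c.
Proof.
move=> [s1 [p1 l1]] [s2 [p2 l2]]; exists (s1 ++ s2).
by rewrite cat_path p1 last_cat l1 p2 l2.
Qed.

Lemma hconn_sym {a b} : hconn a b -> hconn b a.
Proof.
move=> [s [p1 l1]]; exists (rev (belast a s)); split.
  rewrite -l1 rev_path; apply: sub_path p1 => u v; by rewrite H_edge_sym.
case: s p1 l1 => [|x s] /= _ <- //.
by rewrite rev_cons last_rcons.
Qed.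

Lemma hconn_edge {a b} : HE a b -> hconn a b.
Proof. by move=> h; exists [:: b]; rewrite /= h. Qed.

Lemma core_X_le l z : z \in core_pts k (Xs k X eps l) (eps l.+1) ->
  (core_dist k X z <= (eps l.+1)%:E)%E.
Proof.
move=> zc; apply: core_core (ltW (eps_pos l)) zc _ => y yY _.
exact: (fsubsetP (Xs_subX k X eps l)).
Qed.

Lemma level_edge l a b : (l < i')%N ->
  core_edge k (Xs k X eps l) (eps l.+1) a b -> HE a b.
Proof.
move=> li /and4P[ac bc ab dab].
have el : eps l.+1 < alpha by apply: le_lt_trans (eps_mono _ _ li) ha1.
have e0 := eps_pos l.
have sX := fsubsetP (Xs_subX k X eps l).
have sY := fsubsetP (@core_sub _ _ k (Xs k X eps l) (eps l.+1)).
rewrite /H_edge ab (sX _ (sY _ ac)) (sX _ (sY _ bc)) /=.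
set C := component k (Xs k X eps l) (eps l.+1) a.
set Z := ballC (Xs k X eps l) C (eps l.+1).
have aC : a \in C by exact: comp_self.
have bC : b \in C by apply/in_comp; split => //; exists [:: b]; rewrite /= andbT /core_edge ac bc ab dab.
have inZ : forall c x, c \in C -> x \in Xs k X eps l -> dist x c <= eps l.+1 -> x \in Z.
  move=> c x cC xY dxc; rewrite /Z /ballC !inE xY /=; apply/hasP; exists c => //.
have aZ : a \in Z by apply: (inZ a) => //; [exact: sY | rewrite dist_xx ltW].
have bZ : b \in Z by apply: (inZ a) => //; [exact: sY | rewrite dist_sym].
have rZ : (rho k Z a b <= (eps l.+1)%:E)%E.
  rewrite /rho (negbTE ab) !ge_max lee_fin dab andbT.
  apply/andP; split; apply: core_core (ltW e0) _ _.
  - exact: ac.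
  - by move=> x xY dx; apply: (inZ a) => //; rewrite dist_sym.
  - exact: bc.
  - by move=> x xY dx; apply: (inZ b) => //; rewrite dist_sym.
apply: le_trans (Hw_mono k X eps i'.+1 l.+1 a b (ltnW li)) _.
rewrite /= ge_min; apply/orP; right.
apply: le_trans (foldr_le _ _ C _) _.
  exact: comp_in.
rewrite /gw aZ bZ ab rZ /=; apply: le_trans rZ _; rewrite lee_fin; exact: ltW.
Qed.

Lemma level_conn l y z : (l < i')%N ->
  y \in core_pts k (Xs k X eps l) (eps l.+1) ->
  z \in component k (Xs k X eps l) (eps l.+1) y -> hconn y z.
Proof.
move=> li yc /in_comp [_ [s [ps ls]]]; exists s; split => //.
by apply: sub_path ps => u v; exact: level_edge.
Qed.

Lemma alpha0 : 0 <= alpha.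
Proof. by have := eps_mono 0 i' (leq0n _); rewrite heps0 => h; apply: ltW; apply: le_lt_trans h ha1. Qed.

Lemma defect p : p \in X -> (core_dist k X p <= alpha%:E)%E ->
  (p \notin Xi \/ ~ (core_dist k Xi p <= alpha%:E)%E) ->
  exists l y, [/\ (l < i')%N, y \in Xs k X eps l, y \notin Xs k X eps l.+1,
    p \in component k (Xs k X eps l) (eps l.+1) y & dist p y <= eps l.+1].
Proof.
move=> pX cp [pn|pc].
  have [l [li h1 h2]] := removed _ _ pX pn; exists l, p; split => //.
    exact: comp_self (rem_prop _ _ h1 h2).1.
  by rewrite dist_xx; exact: ltW (eps_pos l).
have [k0|k0] := eqVneq k 0%N.
  by exfalso; apply: pc; rewrite core_distE k0 lee_fin alpha0.
have [r [cr ra h1 h2]] := core_cases k0 cp.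
have r0 : 0 <= r.
  have : leq 1 #|` [fset z in X | (z != p) && (dist p z <= r)]%fset|.
    by apply: leq_trans h1; rewrite lt0n.
  rewrite cardfs_gt0 => /fset0Pn [z]; rewrite !inE => /andP[_ /andP[_ dz]].
  exact: le_trans (dist_ge0 _ _) dz.
case: (pselect (exists y, [/\ y \in X, y != p, dist p y <= r & y \notin Xi])) => [[y [yX yp dy yn]]|Hno].
  have [l [li h3 h4]] := removed _ _ yX yn.
  have pC := U2 _ _ h3 h4 _ _ pX k0 dy h2.
  have [pc' _] := (in_comp _ _ _ _).1 pC.
  exists l, y; split => //.
  have := core_X_le _ _ pc'; rewrite cr lee_fin => re.
  exact: le_trans dy re.
exfalso; apply: pc; apply: le_trans (_ : (core_dist k Xi p <= r%:E)%E) _; last by rewrite lee_fin.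
apply: core_le => //; apply: leq_trans h1 _; apply: fsubset_leq_card.
apply/fsubsetP => z; rewrite !inE => /andP[zX /andP[zp dz]]; rewrite zp dz andbT /=.
case: (boolP (z \in Xi)) => // zn; exfalso; apply: Hno; exists z; split => //.
Qed.

Lemma step p q : p \in X -> q \in X -> (core_dist k X p <= alpha%:E)%E ->
  (p \notin Xi \/ ~ (core_dist k Xi p <= alpha%:E)%E) ->
  hconn p q \/ exists z, [/\ z \in X, hconn p z, dist z q < dist p q,
     (core_dist k X z <= alpha%:E)%E & z != q].
Proof.
move=> pX qX cp dp.
have [l [y [li yY yn pC py]]] := defect _ pX cp dp.
have [yc _] := rem_prop _ _ yY yn.
have hyp := level_conn _ _ _ li yc pC.
case: (boolP (q \in component k (Xs k X eps l) (eps l.+1) y)) => qC.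
  by left; apply: hconn_trans (hconn_sym hyp) (level_conn _ _ _ li yc qC).
right; have [z zC dz] := U1 _ _ yY yn _ _ pC py qX qC.
have [zc _] := (in_comp _ _ _ _).1 zC.
exists z; split => //.
- apply: (fsubsetP (Xs_subX k X eps l)).
  exact: (fsubsetP (@core_sub _ _ k (Xs k X eps l) (eps l.+1))).
- exact: hconn_trans (hconn_sym hyp) (level_conn _ _ _ li yc zC).
- apply: le_trans (core_X_le _ _ zc) _; rewrite lee_fin.
  exact: ltW (le_lt_trans (eps_mono _ _ li) ha1).
- by apply: contraNneq qC => <-.
Qed.

Lemma direct p q : p \in Xi -> q \in Xi -> (core_dist k Xi p <= alpha%:E)%E ->
  (core_dist k Xi q <= alpha%:E)%E -> dist p q <= alpha -> p != q -> HE p q.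
Proof.
move=> pXi qXi cp cq dpq pq.
have pc := core_is_core _ _ _ _ pXi ha2 cp; have qc := core_is_core _ _ _ _ qXi ha2 cq.
have e0 := eps_pos i'.
set e := eps i'.+1.
set C := component k Xi e p.
set Z := ballC Xi C e.
have pC : p \in C by exact: comp_self.
have qC : q \in C.
  apply/in_comp; split => //; exists [:: q]; rewrite /= andbT /core_edge pc qc pq /=.
  by split => //; exact: le_trans dpq ha2.
have inZ : forall c x, c \in C -> x \in Xi -> dist x c <= e -> x \in Z.
  move=> c x cC xY dxc; rewrite /Z /ballC !inE xY /=; apply/hasP; exists c => //.
have pZ : p \in Z by apply: (inZ p) => //; rewrite dist_xx ltW.
have qZ : q \in Z by apply: (inZ q) => //; rewrite dist_xx ltW.
have a0 := alpha0.
have rZ : (rho k Z p q <= alpha%:E)%E.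
  rewrite /rho (negbTE pq) !ge_max lee_fin dpq andbT.
  apply/andP; split; apply: core_sub_le a0 _ _.
  - exact: cp.
  - move=> x xY dx; apply: (inZ p) => //; rewrite dist_sym; exact: le_trans dx ha2.
  - exact: cq.
  - move=> x xY dx; apply: (inZ q) => //; rewrite dist_sym; exact: le_trans dx ha2.
have sX := fsubsetP (Xs_subX k X eps i').
rewrite /H_edge pq (sX _ pXi) (sX _ qXi) /= ge_min; apply/orP; right.
apply: le_trans (foldr_le _ _ C _) _; first exact: comp_in.
have rZe : (rho k Z p q <= e%:E)%E by apply: le_trans rZ _; rewrite lee_fin.
by rewrite /gw pZ qZ pq rZe /=.
Qed.

Definition mu (p q : P) := count (fun ab : P * P => dist ab.1 ab.2 < dist p q)
  [seq (a, b) | a <- enum_fset X, b <- enum_fset X].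

Lemma count_lt (T : eqType) (P1 P2 : pred T) (s : seq T) x :
  (forall y, P1 y -> P2 y) -> x \in s -> P2 x -> ~~ P1 x ->
  (count P1 s < count P2 s)%N.
Proof.
move=> H; elim: s => //= z s IH; rewrite inE => /orP[/eqP <-|xs] h2 h1.
  rewrite h2 (negbTE h1) add0n add1n ltnS; apply: sub_count => y; exact: H.
apply: leq_ltn_trans (_ : (P1 z + count P1 s <= P2 z + count P1 s)%N) _.
  by rewrite leq_add2r; case: (P1 z) (H z) => // ->.
by rewrite ltn_add2l IH.
Qed.

Lemma mu_lt a b c d : a \in X -> b \in X -> dist a b < dist c d -> (mu a b < mu c d)%N.
Proof.
move=> aX bX h; apply: (@count_lt _ _ _ _ (a, b)).
- move=> [u v] /= h'; exact: lt_trans h' h.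
- by apply: allpairs_f.
- by [].
- by rewrite /= ltxx.
Qed.

Lemma main_conn m p q : (mu p q < m)%N -> p \in X -> q \in X -> p != q ->
  (core_dist k X p <= alpha%:E)%E -> (core_dist k X q <= alpha%:E)%E ->
  dist p q <= alpha -> hconn p q.
Proof.
elim: m p q => [//|m IH] p q hm pX qX pq cp cq dpq.
case: (pselect (p \notin Xi \/ ~ (core_dist k Xi p <= alpha%:E)%E)) => [dp|ndp].
  have [//|[z [zX hpz dz cz zq]]] := step _ _ pX qX cp dp.
  apply: hconn_trans hpz (IH z q _ zX qX zq cz cq _); last exact: le_trans (ltW dz) dpq.
  by apply: leq_trans (mu_lt _ _ _ _ zX qX dz) _; rewrite -ltnS.
case: (pselect (q \notin Xi \/ ~ (core_dist k Xi q <= alpha%:E)%E)) => [dq|ndq].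
  have [/hconn_sym //|[z [zX hqz dz cz zp]]] := step _ _ qX pX cq dq.
  have dz' : dist p z < dist p q by rewrite (dist_sym p z) (dist_sym p q).
  apply: hconn_trans (IH p z _ pX zX _ cp cz _) (hconn_sym hqz).
  - by apply: leq_trans (mu_lt _ _ _ _ pX zX dz') _; rewrite -ltnS.
  - by rewrite eq_sym.
  - exact: le_trans (ltW dz') dpq.
have pXi : p \in Xi by case: (boolP (p \in Xi)) => // h; exfalso; apply: ndp; left.
have qXi : q \in Xi by case: (boolP (q \in Xi)) => // h; exfalso; apply: ndq; left.
have cp' : (core_dist k Xi p <= alpha%:E)%E.
  by case: (pselect (core_dist k Xi p <= alpha%:E)%E) => // h; exfalso; apply: ndp; right.
have cq' : (core_dist k Xi q <= alpha%:E)%E.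
  by case: (pselect (core_dist k Xi q <= alpha%:E)%E) => // h; exfalso; apply: ndq; right.
exact/hconn_edge/direct.
Qed.

End Main.

End Lev.


Local Open Scope fset_scope.
Local Open Scope ring_scope.
Local Open Scope fset_scope.

Theorem lemma5p8 (R : realType) (n : nat) (hn : (2 <= n)%N)
    (X : {fset 'rV[R]_n}) (k : nat) (eps : nat -> R)
    (heps0 : eps 0%N = 0) (heps : forall j, eps j < eps j.+1)
    (i : nat) (alpha : R) (h1 : eps i.-1 < alpha) (h2 : alpha <= eps i) :
  (forall p q, H_edge k X eps i alpha p q -> G_edge k X alpha p q) /\
  (forall p q, G_edge k X alpha p q ->
     exists s : seq 'rV[R]_n, path (H_edge k X eps i alpha) p s /\ last p s = q).
Proof.
case: i h1 h2 => [|i'] /= h1 h2.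
  by exfalso; have := lt_le_trans h1 h2; rewrite ltxx.
split.
  move=> p q /and4P[pX qX pq hw]; rewrite /G_edge pX qX pq /=.
  exact: le_trans (rho_le_Hw k X eps i'.+1 p q) hw.
move=> p q /and4P[pX qX pq]; rewrite /rho (negbTE pq) !ge_max lee_fin.
move=> /andP[/andP[cp cq] dpq].
exact: (@main_conn R n k X eps hn heps0 heps i' alpha h1 h2 (mu R n X p q).+1 p q (ltnSn _) pX qX pq cp cq dpq).
Qed.
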